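(* Let $q>1$. There is no $u\in C^{4}(\mathbb{R}^{2})$, $u>0$, solving $\Delta^{2}u+u^{-q}=0$ in $\mathbb{R}^{2}$ and satisfying $\lim_{|x|\to+\infty}(\ln|x|)^{1/q}u(x)=+\infty$. Consequently, there is no such solution with $\inf_{\mathbb{R}^{2}}u>0$. *)

(* Defs.v *)
From Stdlib Require Import Reals List.
From Coquelicot Require Import Coquelicot.
Open Scope R_scope.

Definition dx (f : R -> R -> R) : R -> R -> R :=
  fun x y => Derive (fun t => f t y) x.
Definition dy (f : R -> R -> R) : R -> R -> R :=
  fun x y => Derive (fun t => f x t) y.

(* Iterated partial derivative along a list of directions
   (true = d/dx1, false = d/dx2), innermost derivative last in the list. *)
Fixpoint Dpart (l : list bool) (f : R -> R -> R) : R -> R -> R :=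
  match l with
  | nil => f
  | b :: l' => (if b then dx else dy) (Dpart l' f)
  end.

Definition norm2 (x y : R) : R := sqrt (x ^ 2 + y ^ 2).

Definition cont2 (f : R -> R -> R) : Prop :=
  forall x y eps, 0 < eps -> exists delta, 0 < delta /\
    forall x' y', norm2 (x' - x) (y' - y) < delta ->
      Rabs (f x' y' - f x y) < eps.

Definition C4 (u : R -> R -> R) : Prop :=
  (forall l : list bool, (length l < 4)%nat -> forall x y,
      ex_derive (fun t => Dpart l u t y) x /\ ex_derive (fun t => Dpart l u x t) y)
  /\ (forall l : list bool, (length l <= 4)%nat -> cont2 (Dpart l u)).

Definition lap (f : R -> R -> R) : R -> R -> R :=
  fun x y => dx (dx f) x y + dy (dy f) x y.
Definition bilap (f : R -> R -> R) : R -> R -> R := lap (lap f).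

Definition positive_solution (q : R) (u : R -> R -> R) : Prop :=
  C4 u /\ (forall x y, 0 < u x y) /\
  (forall x y, bilap u x y + Rpower (u x y) (- q) = 0).

(* Main.v *)
Require Import Defs.
From Stdlib Require Import Reals Lra Lia Psatz FunctionalExtensionality.
From Coquelicot Require Import Coquelicot.
Open Scope R_scope.

Lemma norm2_le a b : norm2 a b <= Rabs a + Rabs b.
Proof.
  unfold norm2. rewrite <- (sqrt_square (Rabs a + Rabs b)).
  2: { pose proof (Rabs_pos a); pose proof (Rabs_pos b); lra. }
  apply sqrt_le_1_alt.
  pose proof (Rabs_pos a); pose proof (Rabs_pos b).
  assert (a ^ 2 = Rabs a * Rabs a) by (rewrite <- Rabs_mult, Rabs_right; [ring| nra]).
  assert (b ^ 2 = Rabs b * Rabs b) by (rewrite <- Rabs_mult, Rabs_right; [ring| nra]).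
  nra.
Qed.

Lemma cont2_2d f : cont2 f -> forall x y, continuity_2d_pt f x y.
Proof.
  intros H x y eps. destruct (H x y eps (cond_pos eps)) as [d [Hd Hd']].
  assert (0 < d/2) by lra.
  exists (mkposreal _ H0). simpl. intros u v Hu Hv. apply Hd'.
  pose proof (norm2_le (u-x) (v-y)). lra.
Qed.

Lemma cont2_cont f x y : cont2 f ->
  continuous (fun z : R * R => f (fst z) (snd z)) (x, y).
Proof.
  intro H. apply continuity_2d_pt_filterlim. now apply cont2_2d.
Qed.

Lemma c2d_cont1 F r t : continuity_2d_pt F r t -> continuous (fun s => F r s) t.
Proof.
  intro H. apply continuity_2d_pt_filterlim in H.
  apply (continuous_comp_2 (fun _ => r) (fun s => s) F t).
  - apply continuous_const.
  - apply continuous_id.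
  - exact H.
Qed.

Lemma c2d_cos r t : continuity_2d_pt (fun _ v => cos v) r t.
Proof. apply (continuity_1d_2d_pt_comp cos (fun _ v => v)).
  apply continuity_cos. apply continuity_2d_pt_id2. Qed.
Lemma c2d_sin r t : continuity_2d_pt (fun _ v => sin v) r t.
Proof. apply (continuity_1d_2d_pt_comp sin (fun _ v => v)).
  apply continuity_sin. apply continuity_2d_pt_id2. Qed.

Definition pol (g : R -> R -> R) r t := g (r * cos t) (r * sin t).

Lemma c2d_pol P r t : cont2 P -> continuity_2d_pt (pol P) r t.
Proof.
  intro H. apply continuity_2d_pt_filterlim. unfold pol.
  apply (continuous_comp_2 (fun z : R * R => fst z * cos (snd z))
    (fun z : R * R => fst z * sin (snd z)) P).
  - apply (continuity_2d_pt_filterlim (fun u v => u * cos v)).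
    apply continuity_2d_pt_mult. apply continuity_2d_pt_id1. apply c2d_cos.
  - apply (continuity_2d_pt_filterlim (fun u v => u * sin v)).
    apply continuity_2d_pt_mult. apply continuity_2d_pt_id1. apply c2d_sin.
  - apply cont2_cont. exact H.
Qed.

Definition C1 (g : R -> R -> R) : Prop :=
  (forall x y, ex_derive (fun t => g t y) x /\ ex_derive (fun t => g x t) y)
  /\ cont2 g /\ cont2 (dx g) /\ cont2 (dy g).

Lemma C1_diff g x y : C1 g -> differentiable_pt_lim g x y (dx g x y) (dy g x y).
Proof.
  intros [He [Hc [Hx Hy]]].
  apply filterdiff_differentiable_pt_lim.
  eapply filterdiff_ext_lin.
  apply (is_derive_filterdiff g x y (dx g)).
  - apply filter_forall. intros [a b]. simpl. unfold dx. apply Derive_correct. exact (proj1 (He a b)).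
  - apply Derive_correct. exact (proj2 (He x y)).
  - apply cont2_cont. exact Hx.
  - intros [a b]. simpl. unfold plus, scal; simpl. unfold mult; simpl.
    unfold dy. ring.
Qed.
Lemma pol_dr g r t : C1 g ->
  is_derive (fun r => pol g r t) r (cos t * pol (dx g) r t + sin t * pol (dy g) r t).
Proof.
  intro H. apply is_derive_Reals. unfold pol.
  replace (cos t * dx g (r * cos t) (r * sin t) + sin t * dy g (r * cos t) (r * sin t))
    with (dx g (r * cos t) (r * sin t) * cos t + dy g (r * cos t) (r * sin t) * sin t) by ring.
  apply (derivable_pt_lim_comp_2d g (fun r => r * cos t) (fun r => r * sin t)).
  - apply C1_diff; auto.
  - apply is_derive_Reals. auto_derive; auto; ring.
  - apply is_derive_Reals. auto_derive; auto; ring.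
Qed.

Lemma pol_dt g r t : C1 g ->
  is_derive (fun t => pol g r t) t (- (r * sin t) * pol (dx g) r t + r * cos t * pol (dy g) r t).
Proof.
  intro H. apply is_derive_Reals. unfold pol.
  replace (- (r * sin t) * dx g (r * cos t) (r * sin t) + r * cos t * dy g (r * cos t) (r * sin t))
    with (dx g (r * cos t) (r * sin t) * (- (r * sin t)) + dy g (r * cos t) (r * sin t) * (r * cos t)) by ring.
  apply (derivable_pt_lim_comp_2d g (fun t => r * cos t) (fun t => r * sin t)).
  - apply C1_diff; auto.
  - apply is_derive_Reals. auto_derive; auto; ring.
  - apply is_derive_Reals. auto_derive; auto; ring.
Qed.
Ltac c2d := repeat first [apply continuity_2d_pt_plus | apply continuity_2d_pt_minus | apply continuity_2d_pt_mult | apply continuity_2d_pt_opp | apply continuity_2d_pt_id1 | apply c2d_cos | apply c2d_sin | (apply c2d_pol; assumption) | apply continuity_2d_pt_const].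

Definition Av g r := RInt (fun t => pol g r t) 0 (2*PI).
Definition Rad g r t := cos t * pol (dx g) r t + sin t * pol (dy g) r t.

Lemma Av_der g r : C1 g -> is_derive (Av g) r (RInt (Rad g r) 0 (2*PI)).
Proof.
  intro H. pose proof H as [He [Hc [Hx Hy]]].
  assert (E: forall u t, Derive (fun z => pol g z t) u = Rad g u t)
    by (intros; apply is_derive_unique, pol_dr; auto).
  replace (RInt (Rad g r) 0 (2*PI)) with (RInt (fun t => Derive (fun u => pol g u t) r) 0 (2*PI))
    by (apply RInt_ext; intros; apply E).
  unfold Av. apply (is_derive_RInt_param (fun u t => pol g u t)).
  - apply filter_forall; intros; eexists; apply pol_dr; auto.
  - intros. eapply continuity_2d_pt_ext. intros; symmetry; apply E.
    unfold Rad. c2d.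
  - apply filter_forall. intros. apply (@ex_RInt_continuous R_CompleteNormedModule). intros. apply c2d_cont1. apply c2d_pol; auto.
Qed.

Definition C2 g := C1 g /\ C1 (dx g) /\ C1 (dy g).

Definition Hf g r t := - sin t * pol (dx g) r t + cos t * pol (dy g) r t.
Definition dHf g r t := - cos t * pol (dx g) r t
  + - sin t * (- (r * sin t) * pol (dx (dx g)) r t + r * cos t * pol (dy (dx g)) r t)
  + - sin t * pol (dy g) r t
  + cos t * (- (r * sin t) * pol (dx (dy g)) r t + r * cos t * pol (dy (dy g)) r t).
Definition Ef g r t := Rad g r t + r * (cos t * Rad (dx g) r t + sin t * Rad (dy g) r t).

Lemma Hf_dt g r t : C2 g -> is_derive (Hf g r) t (dHf g r t).
Proof.
  intros [H1 [H2 H3]]. unfold Hf. auto_derive.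
  - split; [eexists; apply pol_dt; auto|]. split; [eexists; apply pol_dt; auto|]. auto.
  - replace (Derive (fun x : R => pol (dx g) r x) t) with (Derive (fun x : R => pol (dx g) r x) t) by reflexivity; rewrite (is_derive_unique (fun x : R => pol (dx g) r x) t _ (pol_dt (dx g) r t H2)).
    replace (Derive (fun x : R => pol (dy g) r x) t) with (Derive (fun x : R => pol (dy g) r x) t) by reflexivity; rewrite (is_derive_unique (fun x : R => pol (dy g) r x) t _ (pol_dt (dy g) r t H3)).
    unfold dHf. ring.
Qed.

Lemma Ef_dr g r t : C2 g -> is_derive (fun u => u * Rad g u t) r (Ef g r t).
Proof.
  intros [H1 [H2 H3]]. unfold Rad. auto_derive.
  - split; [eexists; apply pol_dr; auto|]. split; [eexists; apply pol_dr; auto|]. auto.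
  - replace (Derive (fun x : R => pol (dx g) x t) r) with (Derive (fun x : R => pol (dx g) x t) r) by reflexivity; rewrite (is_derive_unique (fun x : R => pol (dx g) x t) r _ (pol_dr (dx g) r t H2)).
    replace (Derive (fun x : R => pol (dy g) x t) r) with (Derive (fun x : R => pol (dy g) x t) r) by reflexivity; rewrite (is_derive_unique (fun x : R => pol (dy g) x t) r _ (pol_dr (dy g) r t H3)).
    unfold Ef, Rad. ring.
Qed.

Lemma Ef_eq g r t : Ef g r t + dHf g r t = r * pol (lap g) r t.
Proof.
  assert (Hs : sin t ^ 2 + cos t ^ 2 = 1) by (pose proof (sin2_cos2 t); unfold Rsqr in *; lra).
  unfold Ef, dHf, Rad, pol, lap.
  transitivity (r * ((sin t ^ 2 + cos t ^ 2) * (dx (dx g) (r * cos t) (r * sin t) + dy (dy g) (r * cos t) (r * sin t)))).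
  - ring.
  - rewrite Hs. ring.
Qed.
Lemma Hf_per g r : Hf g r (2*PI) = Hf g r 0.
Proof. unfold Hf, pol. rewrite cos_2PI, sin_2PI, cos_0, sin_0. reflexivity. Qed.

Lemma C2_conts g : C2 g -> cont2 g /\ cont2 (dx g) /\ cont2 (dy g) /\ cont2 (dx (dx g)) /\
  cont2 (dy (dx g)) /\ cont2 (dx (dy g)) /\ cont2 (dy (dy g)).
Proof. intros [[_ [? [? ?]]] [[_ [_ [? ?]]] [_ [_ [? ?]]]]]. tauto. Qed.

Lemma Av_der2 g r : C2 g ->
  is_derive (fun r => RInt (fun t => r * Rad g r t) 0 (2*PI)) r (r * Av (lap g) r).
Proof.
  intro H. pose proof (C2_conts g H) as [c0 [c1 [c2 [c3 [c4 [c5 c6]]]]]].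
  assert (E: forall u t, Derive (fun z => z * Rad g z t) u = Ef g u t)
    by (intros; apply is_derive_unique, Ef_dr; auto).
  replace (r * Av (lap g) r) with (RInt (fun t => Derive (fun u => u * Rad g u t) r) 0 (2*PI)).
  - apply (is_derive_RInt_param (fun u t => u * Rad g u t)).
    + apply filter_forall; intros; eexists; apply Ef_dr; auto.
    + intros. apply (continuity_2d_pt_ext (Ef g)). intros; symmetry; apply E.
      unfold Ef, Rad. c2d.
    + apply filter_forall. intros. apply (@ex_RInt_continuous R_CompleteNormedModule).
      intros. apply (c2d_cont1 (fun u t => u * Rad g u t)). unfold Rad. c2d.
  - rewrite (RInt_ext _ (fun t => r * pol (lap g) r t - dHf g r t)).
    2: { intros. rewrite E. rewrite <- (Ef_eq g r x). change (Ef g r x = Ef g r x + dHf g r x - dHf g r x). ring. }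
    apply is_RInt_unique.
    replace (r * Av (lap g) r) with (minus (scal r (Av (lap g) r)) (minus (Hf g r (2*PI)) (Hf g r 0))).
    2: { rewrite Hf_per, minus_eq_zero, minus_zero_r. reflexivity. }
    apply (is_RInt_minus (V := R_NormedModule) (fun t => scal r (pol (lap g) r t))).
    + apply (@is_RInt_scal R_NormedModule (fun t => pol (lap g) r t) 0 (2*PI) r). apply (RInt_correct (V := R_CompleteNormedModule)).
      apply (@ex_RInt_continuous R_CompleteNormedModule).
      intros. apply (c2d_cont1 (fun u v => pol (dx (dx g)) u v + pol (dy (dy g)) u v)). c2d.
    + apply (is_RInt_derive (V := R_CompleteNormedModule) (Hf g r)).
      * intros. apply Hf_dt; auto.
      * intros. apply (c2d_cont1 (dHf g)). unfold dHf. c2d.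
Qed.
Lemma isd_plus (f g : R -> R) x a b : is_derive f x a -> is_derive g x b -> is_derive (fun t => f t + g t) x (a + b).
Proof. intros. exact (is_derive_plus f g x a b H H0). Qed.
Lemma isd_minus (f g : R -> R) x a b : is_derive f x a -> is_derive g x b -> is_derive (fun t => f t - g t) x (a - b).
Proof. intros. exact (is_derive_minus f g x a b H H0). Qed.
Lemma deriv_cont f x l : is_derive f x l -> continuity_pt f x.
Proof. intro H. apply continuity_pt_filterlim. apply (@ex_derive_continuous R_AbsRing R_NormedModule f x). eexists; eauto. Qed.

Lemma mono f df a b : a <= b -> (forall x, a <= x <= b -> is_derive f x (df x)) ->
  (forall x, a <= x <= b -> df x <= 0) -> f b <= f a.
Proof.
  intros Hab Hd Hn. destruct (MVT_gen f a b df) as [c [Hc Hc']].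
  - intros. apply Hd. rewrite Rmin_left, Rmax_right in H; lra.
  - intros. eapply deriv_cont. apply Hd. rewrite Rmin_left, Rmax_right in H; lra.
  - rewrite Rmin_left, Rmax_right in Hc; try lra.
    specialize (Hn c Hc). nra.
Qed.

Lemma mono_strict f df a b : a < b -> (forall x, a <= x <= b -> is_derive f x (df x)) ->
  (forall x, a <= x <= b -> df x < 0) -> f b < f a.
Proof.
  intros Hab Hd Hn. destruct (MVT_gen f a b df) as [c [Hc Hc']].
  - intros. apply Hd. rewrite Rmin_left, Rmax_right in H; lra.
  - intros. eapply deriv_cont. apply Hd. rewrite Rmin_left, Rmax_right in H; lra.
  - rewrite Rmin_left, Rmax_right in Hc; try lra.
    specialize (Hn c Hc). nra.
Qed.

Lemma ln_le_id r : 0 < r -> ln r <= r.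
Proof. intro. pose proof (exp_ineq1_le (ln r)). rewrite exp_ln in H0; lra. Qed.

Lemma ode (Au dAu Aw dAw L : R -> R) :
  (forall r, is_derive Aw r (dAw r)) ->
  (forall r, is_derive (fun r => r * dAw r) r (r * L r)) -> (forall r, L r < 0) ->
  (forall r, is_derive Au r (dAu r)) ->
  (forall r, is_derive (fun r => r * dAu r) r (r * Aw r)) -> (forall r, 0 < Au r) -> False.
Proof.
  intros HAw Hh HL HAu Hk Hpos.
  set (h := fun r => r * dAw r).
  assert (h1 : h (1/2) <= h 0).
  { apply (mono h (fun r => r * L r)); try lra. intros; apply Hh.
    intros. specialize (HL x). nra. }
  assert (h2 : h 1 < h (1/2)).
  { apply (mono_strict h (fun r => r * L r)); try lra. intros; apply Hh.
    intros. specialize (HL x). nra. }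
  assert (h0 : h 0 = 0) by (unfold h; ring).
  set (c := - h 1).
  assert (cpos : 0 < c) by (unfold c; lra).
  assert (Hr1 : forall r, 1 <= r -> h r <= - c).
  { intros. unfold c. rewrite Ropp_involutive. apply (mono h (fun r => r * L r)); try lra. intros; apply Hh.
    intros. specialize (HL x). nra. }
  assert (Hw : forall r, 1 <= r -> Aw r + c * ln r <= Aw 1).
  { intros r Hr.
    replace (Aw 1) with (Aw 1 + c * ln 1) by (rewrite ln_1; ring).
    apply (mono (fun r => Aw r + c * ln r) (fun r => dAw r + c * / r)); auto.
    - intros. apply (isd_plus Aw (fun r => c * ln r)). apply HAw.
      auto_derive. lra. field. lra.
    - intros. specialize (Hr1 x (proj1 H)). unfold h in Hr1.
      apply Rmult_le_reg_l with x; try lra. field_simplify; lra. }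
  set (R1 := exp ((Rabs (Aw 1) + 1) / c)).
  assert (R1ge : 1 <= R1).
  { unfold R1. pose proof (exp_ineq1_le ((Rabs (Aw 1) + 1) / c)).
    assert (0 <= (Rabs (Aw 1) + 1) / c). { apply Rdiv_le_0_compat; try lra. pose proof (Rabs_pos (Aw 1)); lra. }
    lra. }
  assert (Hw2 : forall r, R1 <= r -> Aw r <= -1).
  { intros r Hr. specialize (Hw r ltac:(lra)).
    assert (ln R1 <= ln r) by (apply ln_le; lra).
    unfold R1 in H. rewrite ln_exp in H.
    assert (c * ((Rabs (Aw 1) + 1) / c) = Rabs (Aw 1) + 1) by (field; lra).
    pose proof (Rle_abs (Aw 1)). nra. }
  set (k := fun r => r * dAu r).
  set (K := k R1 + R1 ^ 2 / 2).
  assert (Hk2 : forall r, R1 <= r -> k r <= K - r ^ 2 / 2).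
  { intros r Hr. unfold K.
    cut (k r + r ^ 2 / 2 <= k R1 + R1 ^ 2 / 2). lra.
    apply (mono (fun r => k r + r ^ 2 / 2) (fun r => r * Aw r + r)); auto.
    - intros. apply (isd_plus k (fun r => r ^ 2 / 2)). apply Hk.
      auto_derive. auto. field.
    - intros. specialize (Hw2 x (proj1 H)). nra. }
  set (C := Au R1 + R1 ^ 2 / 4 - K * ln R1).
  assert (Hu : forall r, R1 <= r -> Au r + r ^ 2 / 4 - K * ln r <= C).
  { intros r Hr. unfold C.
    apply (mono (fun r => Au r + r ^ 2 / 4 - K * ln r) (fun r => dAu r + r / 2 - K * / r)); auto.
    - intros. apply (isd_minus (fun r => Au r + r ^ 2 / 4) (fun r => K * ln r)).
      apply (isd_plus Au (fun r => r ^ 2 / 4)). apply HAu.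
      auto_derive. auto. field.
      auto_derive. lra. field. lra.
    - intros. specialize (Hk2 x (proj1 H)). unfold k in Hk2.
      apply Rmult_le_reg_l with x; try lra. field_simplify; try lra. }
  set (r := R1 + 4 * (Rabs K + Rabs C + 1)).
  pose proof (Rabs_pos K). pose proof (Rabs_pos C).
  assert (rge : R1 <= r) by (unfold r; lra).
  specialize (Hu r rge). specialize (Hpos r).
  assert (0 <= ln r) by (rewrite <- ln_1; apply ln_le; lra).
  pose proof (ln_le_id r ltac:(lra)).
  assert (K * ln r <= Rabs K * r).
  { pose proof (Rle_abs K). pose proof (Rle_abs (-K)). rewrite Rabs_Ropp in H4.
    destruct (Rle_dec 0 K); nra. }
  pose proof (Rle_abs C).
  assert (r * r / 4 >= r * (Rabs K + Rabs C + 1)) by (unfold r; nra).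
  nra.
Qed.
Lemma exd_plus (f g : R -> R) x : ex_derive f x -> ex_derive g x -> ex_derive (fun t => f t + g t) x.
Proof. intros [a Ha] [b Hb]. exists (a + b). apply isd_plus; auto. Qed.

Lemma cont2_plus a b : cont2 a -> cont2 b -> cont2 (fun x y => a x y + b x y).
Proof.
  intros Ha Hb x y eps He.
  destruct (Ha x y (eps/2) ltac:(lra)) as [d1 [H1 H1']].
  destruct (Hb x y (eps/2) ltac:(lra)) as [d2 [H2 H2']].
  exists (Rmin d1 d2). split. apply Rmin_pos; auto.
  intros x' y' Hn. pose proof (Rmin_l d1 d2). pose proof (Rmin_r d1 d2).
  specialize (H1' x' y' ltac:(lra)). specialize (H2' x' y' ltac:(lra)).
  replace (a x' y' + b x' y' - (a x y + b x y)) with ((a x' y' - a x y) + (b x' y' - b x y)) by ring.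
  pose proof (Rabs_triang (a x' y' - a x y) (b x' y' - b x y)). lra.
Qed.

Lemma dx_plus a b : (forall x y, ex_derive (fun t => a t y) x) -> (forall x y, ex_derive (fun t => b t y) x) ->
  dx (fun x y => a x y + b x y) = fun x y => dx a x y + dx b x y.
Proof.
  intros Ha Hb. apply functional_extensionality; intro x. apply functional_extensionality; intro y.
  unfold dx. apply (Derive_plus (fun t => a t y) (fun t => b t y)); auto.
Qed.

Lemma dy_plus a b : (forall x y, ex_derive (fun t => a x t) y) -> (forall x y, ex_derive (fun t => b x t) y) ->
  dy (fun x y => a x y + b x y) = fun x y => dy a x y + dy b x y.
Proof.
  intros Ha Hb. apply functional_extensionality; intro x. apply functional_extensionality; intro y.
  unfold dy. apply (Derive_plus (fun t => a x t) (fun t => b x t)); auto.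
Qed.

Lemma C1_plus a b : C1 a -> C1 b -> C1 (fun x y => a x y + b x y).
Proof.
  intros [Ea [Ca [Xa Ya]]] [Eb [Cb [Xb Yb]]].
  split; [|split; [|split]].
  - intros x y. split.
    + exact (exd_plus (fun t => a t y) (fun t => b t y) x (proj1 (Ea x y)) (proj1 (Eb x y))).
    + exact (exd_plus (fun t => a x t) (fun t => b x t) y (proj2 (Ea x y)) (proj2 (Eb x y))).
  - apply cont2_plus; auto.
  - rewrite dx_plus by (intros; first [exact (proj1 (Ea x y))|exact (proj1 (Eb x y))]). apply cont2_plus; auto.
  - rewrite dy_plus by (intros; first [exact (proj2 (Ea x y))|exact (proj2 (Eb x y))]). apply cont2_plus; auto.
Qed.

Lemma C2_plus a b : C2 a -> C2 b -> C2 (fun x y => a x y + b x y).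
Proof.
  intros [A0 [A1 A2]] [B0 [B1 B2]].
  pose proof A0 as [Ea _]. pose proof B0 as [Eb _].
  split; [|split].
  - apply C1_plus; auto.
  - rewrite dx_plus by (intros; first [exact (proj1 (Ea x y))|exact (proj1 (Eb x y))]). apply C1_plus; auto.
  - rewrite dy_plus by (intros; first [exact (proj2 (Ea x y))|exact (proj2 (Eb x y))]). apply C1_plus; auto.
Qed.

Lemma C1_Dpart u l : C4 u -> (length l <= 3)%nat -> C1 (Dpart l u).
Proof.
  intros [He Hc] Hl. split; [|split; [|split]].
  - intros x y; apply (He l ltac:(lia) x y).
  - apply Hc; lia.
  - apply (Hc (cons true l)); simpl; lia.
  - apply (Hc (cons false l)); simpl; lia.
Qed.

Lemma C2_Dpart u l : C4 u -> (length l <= 2)%nat -> C2 (Dpart l u).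
Proof.
  intros H Hl. split; [|split].
  - apply C1_Dpart; auto; lia.
  - apply (C1_Dpart u (cons true l)); auto; simpl; lia.
  - apply (C1_Dpart u (cons false l)); auto; simpl; lia.
Qed.

Lemma C2_lap u : C4 u -> C2 (lap u).
Proof.
  intro H. change (C2 (fun x y => Dpart (cons true (cons true nil)) u x y + Dpart (cons false (cons false nil)) u x y)).
  apply C2_plus; apply C2_Dpart; auto.
Qed.

Lemma Rad_ex g r : C1 g -> ex_RInt (Rad g r) 0 (2*PI).
Proof.
  intros [_ [c0 [c1 c2]]]. apply (@ex_RInt_continuous R_CompleteNormedModule).
  intros. apply (c2d_cont1 (Rad g)). unfold Rad. c2d.
Qed.

Lemma Rad_der g r : C2 g ->
  is_derive (fun r => r * RInt (Rad g r) 0 (2*PI)) r (r * Av (lap g) r).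
Proof.
  intro H. eapply is_derive_ext. 2: apply (Av_der2 g r H).
  intros t. simpl. pose proof H as [H1 _].
  exact (RInt_scal (V := R_CompleteNormedModule) (Rad g t) 0 (2*PI) t (Rad_ex g t H1)).
Qed.

Lemma no_sol q u : positive_solution q u -> False.
Proof.
  intros [HC4 [Hpos Heq]].
  assert (Hu : C2 u) by exact (C2_Dpart u nil HC4 ltac:(simpl; lia)).
  assert (Hw : C2 (lap u)) by (apply C2_lap; auto).
  pose proof (C2_conts _ Hu) as [u0 [u1 [u2 [u3 [u4 [u5 u6]]]]]].
  pose proof (C2_conts _ Hw) as [w0 [w1 [w2 [w3 [w4 [w5 w6]]]]]].
  apply (ode (Av u) (fun r => RInt (Rad u r) 0 (2*PI)) (Av (lap u)) (fun r => RInt (Rad (lap u) r) 0 (2*PI))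
    (Av (lap (lap u)))).
  - intros r. apply Av_der. apply Hw.
  - intros r. apply Rad_der; auto.
  - intros r. unfold Av.
    assert (E : RInt (fun _ => 0) 0 (2*PI) = 0).
    { rewrite (RInt_const (V := R_CompleteNormedModule)). apply Rmult_0_r. }
    cut (RInt (fun t => pol (lap (lap u)) r t) 0 (2*PI) < RInt (fun _ => 0) 0 (2*PI)); [rewrite E; auto|]. apply RInt_lt.
    + pose proof PI_RGT_0; lra.
    + intros. apply continuous_const.
    + intros. apply (c2d_cont1 (fun u0 v => pol (dx (dx (lap u))) u0 v + pol (dy (dy (lap u))) u0 v)). c2d.
    + intros. pose proof (Heq (r * cos x) (r * sin x)). unfold pol.
      change (lap (lap u)) with (bilap u).
      assert (0 < Rpower (u (r * cos x) (r * sin x)) (- q)) by (unfold Rpower; apply exp_pos). lra.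
  - intros r. apply Av_der. apply Hu.
  - intros r. apply Rad_der; auto.
  - intros r. unfold Av.
    assert (E : RInt (fun _ => 0) 0 (2*PI) = 0).
    { rewrite (RInt_const (V := R_CompleteNormedModule)). apply Rmult_0_r. }
    cut (RInt (fun _ => 0) 0 (2*PI) < RInt (fun t => pol u r t) 0 (2*PI)); [rewrite E; auto|]. apply RInt_lt.
    + pose proof PI_RGT_0; lra.
    + intros. apply (c2d_cont1 (pol u)). c2d.
    + intros. apply continuous_const.
    + intros. apply Hpos.
Qed.

Theorem mainTheorem17 (q : R) (hq : 1 < q) :
  (~ exists u : R -> R -> R,
      positive_solution q u /\
      (* lim_{|x| -> +oo} (ln |x|)^{1/q} u(x) = +oo *)
      (forall M : R, exists R0 : R, forall x y : R, R0 < norm2 x y ->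
          M < Rpower (ln (norm2 x y)) (1 / q) * u x y))
  /\
  (~ exists u : R -> R -> R,
      positive_solution q u /\
      (* inf_{R^2} u > 0 *)
      (exists c : R, 0 < c /\ forall x y : R, c <= u x y)).
Proof.
  split; intros [u [Hs _]]; exact (no_sol q u Hs).
Qed.
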